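(* For any extended string $h\in \mathcal{L}_e(M)$, let $\beta=\mathsf{tam}(h)$ and $(q,\tilde{q},z)=f(h)$. Then $\mathcal{E}_{S/G}^C(\beta)=\mathsf{UR}_{\Delta_H(z)}(q)$.
   Context: Let $G=(X,\Sigma,\delta,X_0)$ be a finite-state automaton (partial transition function $\delta$, set of initial states $X_0$), with $\Sigma=\Sigma_o\dot\cup\Sigma_{uo}=\Sigma_c\dot\cup\Sigma_{uc}$ (observable/unobservable, controllable/uncontrollable events), and natural projection $P:\Sigma^*\to\Sigma_o^*$. For a state $x$ of an automaton, $\Delta(x)$ denotes the set of events defined at $x$. A partial-observation supervisor $S:P(\mathcal{L}(G))\to\Gamma$ (with $\Gamma=\{\gamma\subseteq\Sigma:\Sigma_{uc}\subseteq\gamma\}$) is realized by a deterministic automaton $H=(Z,\Sigma,\xi,z_0)$ that changes state only on observable events and satisfies $\Delta_H(\xi(z_0,s))=S(P(s))$ for all $s\in\mathcal{L}(S/G)$, where $\mathcal{L}(S/G)$ is the closed-loop language (union over $x_0\in X_0$ of strings generated from $x_0$ with each event enabled by $S$ at the observation of the preceding prefix). For $q\subseteq X$, $\gamma\subseteq\Sigma$, $\sigma\in\Sigma_o$: $\mathsf{UR}_\gamma(q)=\{\delta(x,s):x\in q,s\in(\Sigma_{uo}\cap\gamma)^*\}$, $\mathsf{NX}_\sigma(q)=\{\delta(x,\sigma):x\in q\}$, $\mathsf{NX}_\epsilon(q)=q$, and $\mathcal{O}(q,\gamma)=\{\sigma\in\Sigma_o\cap\gamma:\exists x\in q,w\in(\Sigma_{uo}\cap\gamma)^*,\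 \delta(x,w\sigma)\text{ defined}\}$. The supervisor's current-state estimate after observation $\alpha\in P(\mathcal{L}(S/G))$ is $\mathcal{E}^C_{S/G}(\alpha)=\{\delta(x_0,s):x_0\in X_0,s\in\mathcal{L}(S/G,x_0),P(s)=\alpha\}$ (empty if $\alpha\notin P(\mathcal{L}(S/G))$). The augmented system $\tilde G$ has states $\tilde X\subseteq X_0\times X$, initial states $\tilde X_0=\{(x_0,x_0):x_0\in X_0\}$ and $\tilde\delta((x_0,x),\sigma)=(x_0,\delta(x,\sigma))$; $\widetilde{\mathsf{UR}},\widetilde{\mathsf{NX}}$ denote the same operators on $\tilde G$. A set $\Sigma_v\subseteq\Sigma_o$ of vulnerable events is given; for $\sigma\in\Sigma_o$, the attacker action set is $\mathcal{V}(\sigma)=\{\hat\sigma':\sigma'\in\Sigma_v\}\cup\{\hat\epsilon\}$ if $\sigma\in\Sigma_v$ and $\mathcal{V}(\sigma)=\{\hat\sigma\}$ otherwise (hatted events denote tampered observations). The All Attack Structure is $M=(Q,\Sigma_M,f,q_0)$ with $Q=Q_e\dot\cup Q_a$, environment states $Q_e\subseteq 2^X\times2^{\tilde X}\times(Z\cup\{z_{\mathsf{att}}\})$, attack states $Q_a\subseteq 2^X\times2^{\tilde X}\times Z\times\Sigma_o$, initial state $q_0=(X_0,\tilde X_0,z_0)$, events $\Sigma_M=\Sigma_o\cup\hat\Sigma_o^\epsilon$, and $\Delta_H(z_{\mathsf{att}})=\emptyset$. Transitions: from $q_e=(q,\tilde q,z)\in Q_e$, the enabled events are $\mathcal{O}(\tilde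 q,\Delta_H(z))$ if $z\in Z$ and none if $z=z_{\mathsf{att}}$, with $f(q_e,\sigma)=(q,\tilde q,z,\sigma)$; from $q_a=(q,\tilde q,z,\sigma)$, the enabled events are $\mathcal{V}(\sigma)$, and for $\hat\sigma_a\in\mathcal{V}(\sigma)$, $f(q_a,\hat\sigma_a)=(q',\tilde q',z')$ with $q'=\mathsf{NX}_{\sigma_a}(\mathsf{UR}_{\Delta_H(z)}(q))$, $\tilde q'=\widetilde{\mathsf{NX}}_{\sigma}(\widetilde{\mathsf{UR}}_{\Delta_H(z)}(\tilde q))$, and $z'=\xi(z,\sigma_a)$ if $q'\neq\emptyset$, $z'=z_{\mathsf{att}}$ if $q'=\emptyset$. $\mathcal{L}_e(M)$ is the set of strings of $M$ ending in an environment state; for $h=\sigma_1\hat\sigma_{a1}\cdots\sigma_n\hat\sigma_{an}\in\mathcal{L}_e(M)$, $\mathsf{tam}(h)=\sigma_{a1}\cdots\sigma_{an}$ (hats removed, $\hat\epsilon$ becoming $\epsilon$), i.e., the tampered observation received by the supervisor. *)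

(* Defs.v *)
From mathcomp Require Import all_boot.
Set Implicit Arguments. Unset Strict Implicit. Unset Printing Implicit Defensive.

Fixpoint dstar (T E : Type) (d : T -> E -> option T) (x : T) (s : seq E) : option T :=
  match s with
  | [::] => Some x
  | e :: s' => match d x e with Some y => dstar d y s' | None => None end
  end.

Section DES.
Variables (E : finType) (obs : {set E}).

Definition proj (s : seq E) : seq E := [seq e <- s | e \in obs].

Definition uo_in (gam : {set E}) (w : seq E) : bool :=
  all (fun e => (e \notin obs) && (e \in gam)) w.

Variables (T : Type) (delta : T -> E -> option T).

Definition UR (gam : {set E}) (q : T -> Prop) : T -> Prop :=
  fun y => exists x w, q x /\ uo_in gam w /\ dstar delta x w = Some y.

Definition NX (e : E) (q : T -> Prop) : T -> Prop :=
  fun y => exists x, q x /\ delta x e = Some y.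

(* NX_sigma_a with sigma_a = epsilon encoded as None *)
Definition NXo (o : option E) (q : T -> Prop) : T -> Prop :=
  match o with None => q | Some e => NX e q end.

Definition Obs (q : T -> Prop) (gam : {set E}) (e : E) : Prop :=
  e \in obs /\ e \in gam /\
  exists x w, q x /\ uo_in gam w /\ dstar delta x (rcons w e) <> None.
End DES.

(* augmented system: states (x0, x) *)
Definition deltat (X E : Type) (delta : X -> E -> option X) (p : X * X) (e : E)
  : option (X * X) := omap (fun y => (p.1, y)) (delta p.2 e).

Definition DeltaH (Z E : finType) (xi : Z -> E -> option Z) (z : Z) : {set E} :=
  [set e | xi z e != None].

(* Delta_H extended to Z \cup {z_att} (None = z_att), Delta_H(z_att) = empty *)
Definition DeltaHo (Z E : finType) (xi : Z -> E -> option Z) (zo : option Z) : {set E} :=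
  match zo with Some z => DeltaH xi z | None => set0 end.

Section ClosedLoop.
Variables (X E : finType) (obs : {set E}) (delta : X -> E -> option X) (X0 : {set X}).
Variable S : seq E -> {set E}.

Definition inLG (x0 : X) (s : seq E) : Prop := dstar delta x0 s <> None.

Definition inCL (x0 : X) (s : seq E) : Prop :=
  dstar delta x0 s <> None /\
  forall t e u, s = t ++ e :: u -> e \in S (proj obs t).

Definition Est (alpha : seq E) : X -> Prop :=
  fun y => exists x0 s, x0 \in X0 /\ inCL x0 s /\ proj obs s = alpha /\
                        dstar delta x0 s = Some y.
End ClosedLoop.

Inductive MState (X Z E : Type) :=
| Qe of (X -> Prop) & (X * X -> Prop) & option Z   (* None = z_att *)
| Qa of (X -> Prop) & (X * X -> Prop) & Z & E.

Inductive MEv (E : Type) :=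
| Env of E
| Att of option E.        (* hat sigma_a; Att None = hat epsilon *)

Arguments Qe {X Z E}. Arguments Qa {X Z E}. Arguments Env {E}. Arguments Att {E}.

Definition Vset (E : finType) (vuln : {set E}) (e : E) (o : option E) : Prop :=
  if e \in vuln then (match o with None => True | Some e' => is_true (e' \in vuln) end)
  else o = Some e.

Section AAS.
Variables (X E Z : finType) (obs vuln : {set E}) (delta : X -> E -> option X)
  (X0 : {set X}) (xi : Z -> E -> option Z) (z0 : Z).

Definition qnext (z : Z) (q : X -> Prop) (o : option E) : X -> Prop :=
  NXo delta o (UR obs delta (DeltaH xi z) q).
Definition qtnext (z : Z) (qt : X * X -> Prop) (e : E) : X * X -> Prop :=
  NX (deltat delta) e (UR obs (deltat delta) (DeltaH xi z) qt).

(* transition function f of M (partial: when z' = xi(z, sigma_a) is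
   undefined and q' is nonempty, no transition) *)
Inductive stepM : MState X Z E -> MEv E -> MState X Z E -> Prop :=
| stepM_env q qt z e :
    Obs obs (deltat delta) qt (DeltaH xi z) e ->
    stepM (Qe q qt (Some z)) (Env e) (Qa q qt z e)
| stepM_att_empty q qt z e o :
    Vset vuln e o -> ~ (exists x, qnext z q o x) ->
    stepM (Qa q qt z e) (Att o) (Qe (qnext z q o) (qtnext z qt e) None)
| stepM_att_eps q qt z e :
    Vset vuln e None -> (exists x, qnext z q None x) ->
    stepM (Qa q qt z e) (Att None) (Qe (qnext z q None) (qtnext z qt e) (Some z))
| stepM_att q qt z e ea z' :
    Vset vuln e (Some ea) -> (exists x, qnext z q (Some ea) x) ->
    xi z ea = Some z' ->
    stepM (Qa q qt z e) (Att (Some ea)) (Qe (qnext z q (Some ea)) (qtnext z qt e) (Some z')).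

Inductive runM : MState X Z E -> seq (MEv E) -> MState X Z E -> Prop :=
| runM_nil m : runM m [::] m
| runM_cons m a m' h m'' : stepM m a m' -> runM m' h m'' -> runM m (a :: h) m''.

Definition q0M : MState X Z E :=
  Qe (fun x => x \in X0) (fun p => p.1 \in X0 /\ p.2 = p.1) (Some z0).
End AAS.

Definition tam (E : Type) (h : seq (MEv E)) : seq E :=
  flatten [seq match a with Att (Some e) => [:: e] | _ => [::] end | a <- h].

(* Main.v *)
Require Import Defs.
From mathcomp Require Import all_boot.
From Stdlib Require Import Setoid.
Set Implicit Arguments. Unset Strict Implicit. Unset Printing Implicit Defensive.

Lemma dstar_cat (E : Type) (T : Type) (d : T -> E -> option T) x s1 s2 :
  dstar d x (s1 ++ s2) = match dstar d x s1 with Some y => dstar d y s2 | None => None end.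
Proof. elim: s1 x => [|e s IH] x //=. case: (d x e) => //. Qed.

Fixpoint clb (E : finType) (obs : {set E}) (S : seq E -> {set E}) (p s : seq E) : bool :=
  match s with [::] => true | e :: s' => (e \in S (proj obs p)) && clb obs S (rcons p e) s' end.

Lemma cl_clb (E : finType) (obs : {set E}) (S : seq E -> {set E}) s p :
  (forall t e u, s = t ++ e :: u -> e \in S (proj obs (p ++ t))) <-> clb obs S p s.
Proof.
elim: s p => [|e s IH] p /=.
- split=> // _ t e u; by case: t.
- split.
  + move=> H. apply/andP; split.
    * by have := H [::] e s erefl; rewrite cats0.
    * apply/IH => t e' u Hs. rewrite cat_rcons. apply: (H (e :: t)). by rewrite Hs.
  + case/andP=> He Hc t e' u. case: t => [|e1 t] /=.
    * case=> ? _; subst. by rewrite cats0.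
    * case=> Ee Hs; subst e1. rewrite -cat_rcons. exact: (proj2 (IH (rcons p e)) Hc t e' u Hs).
Qed.

Lemma inCL_clb (X E : finType) (obs : {set E}) (delta : X -> E -> option X) S x0 s :
  inCL obs delta S x0 s <-> dstar delta x0 s <> None /\ clb obs S [::] s.
Proof.
rewrite /inCL. split=> [[H1 H2]|[H1 H2]]; split=> //.
- exact/(cl_clb obs S s [::]).
- exact/(cl_clb obs S s [::]).
Qed.

Lemma proj_rcons (E : finType) (obs : {set E}) s e :
  proj obs (rcons s e) = if e \in obs then rcons (proj obs s) e else proj obs s.
Proof. by rewrite /proj filter_rcons. Qed.

Lemma proj_cat (E : finType) (obs : {set E}) s1 s2 :
  proj obs (s1 ++ s2) = proj obs s1 ++ proj obs s2.
Proof. by rewrite /proj filter_cat. Qed.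

Lemma clb_cat (E : finType) (obs : {set E}) S p s1 s2 :
  clb obs S p (s1 ++ s2) = clb obs S p s1 && clb obs S (p ++ s1) s2.
Proof.
elim: s1 p => [|e s IH] p /=; first by rewrite cats0.
by rewrite IH cat_rcons andbA.
Qed.

Lemma clb_uo (E : finType) (obs : {set E}) S p w :
  all (fun e => e \notin obs) w ->
  clb obs S p w = all (fun e => e \in S (proj obs p)) w.
Proof.
elim: w p => [|e w IH] p //= /andP[He Hw].
by rewrite IH // proj_rcons (negbTE He).
Qed.

Lemma uo_inE (E : finType) (obs g : {set E}) w :
  uo_in obs g w = all (fun e => e \notin obs) w && all (fun e => e \in g) w.
Proof.
elim: w => //= e w ->.
by case: (e \in obs); case: (e \in g); rewrite /= ?andbF ?andbT.

Qed.

Lemma proj_nil (E : finType) (obs : {set E}) s :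
  proj obs s = [::] -> all (fun e => e \notin obs) s.
Proof.
elim: s => //= e s IH. rewrite /proj /=. case: ifP => He //=.
Qed.

Lemma proj_uo (E : finType) (obs : {set E}) s :
  all (fun e => e \notin obs) s -> proj obs s = [::].
Proof.
elim: s => //= e s IH /andP[He Hs]. rewrite /proj /= (negbTE He). exact: IH.
Qed.

Lemma proj_split (E : finType) (obs : {set E}) s b a :
  proj obs s = rcons b a ->
  exists s1 w, s = s1 ++ a :: w /\ proj obs s1 = b /\ all (fun e => e \notin obs) w.
Proof.
elim/last_ind: s b => [|s e IH] b.
- by case: b.
- rewrite proj_rcons. case: ifP => He H.
  + move/eqP: H; rewrite eqseq_rcons => /andP[/eqP Hp /eqP Hea].
    exists s, [::]. by rewrite cats1 Hea.
  + have [s1 [w [-> [Hp Hw]]]] := IH b H. exists s1, (rcons w e).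
    split; first by rewrite rcons_cat.
    split=> //. by rewrite all_rcons He Hw.
Qed.

Lemma dstar_proj (E Z : finType) (obs : {set E}) (xi : Z -> E -> option Z) :
  (forall z e z', e \notin obs -> xi z e = Some z' -> z' = z) ->
  forall z s zz, dstar xi z s = Some zz -> dstar xi z (proj obs s) = Some zz.
Proof.
move=> Hxi z s; elim: s z => [|e s IH] z zz //=.
rewrite /proj /=. case Hx: (xi z e) => [z1|] // Hd.
case: ifP => He /=.
- rewrite Hx. exact: IH.
- move: Hd. rewrite (Hxi _ _ _ (negbT He) Hx). exact: IH.
Qed.

Lemma UR_UR (E : finType) (obs : {set E}) (T : Type) (d : T -> E -> option T) g q y :
  UR obs d g (UR obs d g q) y <-> UR obs d g q y.
Proof.
split.
- move=> [x [w [[x' [w' [Hq [Hu' Hd']]]] [Hu Hd]]]].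
  exists x', (w' ++ w). split=> //. split.
  + by move: Hu' Hu; rewrite /uo_in all_cat => -> ->.
  + by rewrite dstar_cat Hd'.
- move=> H. exists y, [::]. done.
Qed.

Lemma UR_set0 (E : finType) (obs : {set E}) (T : Type) (d : T -> E -> option T) q y :
  UR obs d set0 q y <-> q y.
Proof.
split.
- move=> [x [[|e w] [Hq [Hu Hd]]]].
  + by case: Hd => <-.
  + by move: Hu; rewrite /uo_in /= in_set0 andbF.
- move=> H. by exists y, [::].
Qed.

Lemma UR_ext (E : finType) (obs : {set E}) (T : Type) (d : T -> E -> option T) g q1 q2 y :
  (forall x, q1 x <-> q2 x) -> (UR obs d g q1 y <-> UR obs d g q2 y).
Proof.
move=> H; split; move=> [x [w [Hq Hr]]]; exists x, w; split=> //; exact/H.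
Qed.

Lemma NX_ext (E : finType) (T : Type) (d : T -> E -> option T) a q1 q2 y :
  (forall x, q1 x <-> q2 x) -> (NX d a q1 y <-> NX d a q2 y).
Proof.
move=> H; split; move=> [x [Hq Hr]]; exists x; split=> //; exact/H.
Qed.

Lemma Est_rcons (X E : finType) (obs : {set E}) (delta : X -> E -> option X) X0 S b a y :
  a \in obs ->
  (Est obs delta X0 S (rcons b a) y <->
   a \in S b /\ UR obs delta (S (rcons b a)) (NX delta a (Est obs delta X0 S b)) y).
Proof.
move=> Ha; split.
- move=> [x0 [s [Hx0 [Hcl [Hp Hd]]]]].
  have [s1 [w [Es [Hp1 Hw]]]] := proj_split Hp. subst s.
  move/inCL_clb: Hcl => [Hdef Hc].
  rewrite clb_cat /= in Hc. case/andP: Hc => Hc1 /andP[Ha' Hcw].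
  rewrite Hp1 in Ha'. rewrite clb_uo // proj_rcons Ha Hp1 in Hcw.
  rewrite dstar_cat in Hd.
  case Hd1: (dstar delta x0 s1) => [x1|]; rewrite Hd1 /= in Hd; last done.
  case Hd2: (delta x1 a) => [x2|]; rewrite Hd2 in Hd; last done.
  split=> //. exists x2, w. split.
  + exists x1; split=> //. exists x0, s1. split=> //. split.
    * apply/inCL_clb. split=> //. by rewrite Hd1.
    * by split.
  + split=> //. by rewrite uo_inE Hw Hcw.
- move=> [HaS [x [w [[x1 [[x0 [s1 [Hx0 [Hcl [Hp Hd1]]]]] Hd2]] [Hu Hdw]]]]].
  move: Hu; rewrite uo_inE => /andP[Hwo Hws].
  exists x0, (s1 ++ a :: w). split=> //. split; last split.
  + move/inCL_clb: Hcl => [_ Hc1]. apply/inCL_clb. split.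
    * by rewrite dstar_cat Hd1 /= Hd2 Hdw.
    * by rewrite clb_cat Hc1 /= Hp HaS /= (clb_uo _ _ Hwo) proj_rcons Ha Hp.
  + by rewrite -cat_rcons proj_cat (proj_uo Hwo) proj_rcons Ha Hp cats0.
  + by rewrite dstar_cat Hd1 /= Hd2 Hdw.
Qed.

Lemma Est_nil (X E : finType) (obs : {set E}) (delta : X -> E -> option X) X0 S y :
  Est obs delta X0 S [::] y <-> UR obs delta (S [::]) (fun x => x \in X0) y.
Proof.
split.
- move=> [x0 [s [Hx0 [Hcl [Hp Hd]]]]].
  have Hw := proj_nil Hp. move/inCL_clb: Hcl => [_ Hc].
  rewrite clb_uo // in Hc.
  exists x0, s. split=> //. split=> //. by rewrite uo_inE Hw.
- move=> [x0 [w [Hx0 [Hu Hd]]]]. move: Hu; rewrite uo_inE => /andP[Hwo Hws].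
  exists x0, w. split=> //. split; last split.
  + apply/inCL_clb. split; first by rewrite Hd. by rewrite clb_uo.
  + exact: proj_uo.
  + done.
Qed.

Lemma tam_rcons (E : Type) (hp : seq (MEv E)) a :
  tam (rcons hp a) = tam hp ++ (match a with Att (Some e) => [:: e] | _ => [::] end).
Proof. by rewrite /tam -cats1 map_cat flatten_cat /= cats0. Qed.

Definition Inv (X E Z : finType) (obs : {set E}) (delta : X -> E -> option X) X0 S
  (xi : Z -> E -> option Z) (z0 : Z) (hp : seq (MEv E)) (m : MState X Z E) : Prop :=
  match m with
  | Qe q qt zo => (forall z, zo = Some z -> dstar xi z0 (tam hp) = Some z) /\
      forall y, Est obs delta X0 S (tam hp) y <-> UR obs delta (DeltaHo xi zo) q y
  | Qa q qt z e => e \in obs /\ dstar xi z0 (tam hp) = Some z /\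
      forall y, Est obs delta X0 S (tam hp) y <-> UR obs delta (DeltaH xi z) q y
  end.

Lemma real_Est (X E Z : finType) (obs : {set E}) (delta : X -> E -> option X) (X0 : {set X})
  (xi : Z -> E -> option Z) (z0 : Z) (S : seq E -> {set E}) :
  (forall z e z', e \notin obs -> xi z e = Some z' -> z' = z) ->
  (forall x0 s, x0 \in X0 -> inCL obs delta S x0 s ->
     exists z, dstar xi z0 s = Some z /\ DeltaH xi z = S (proj obs s)) ->
  forall b x z, Est obs delta X0 S b x -> dstar xi z0 b = Some z -> DeltaH xi z = S b.
Proof.
move=> Hxi Hreal b x z [x0 [s [Hx0 [Hcl [Hp Hd]]]]] Hz.
have [zz [Hzz HD]] := Hreal x0 s Hx0 Hcl.
have := dstar_proj Hxi Hzz. rewrite Hp Hz => -[Ez]. subst zz. by rewrite HD Hp.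
Qed.

Lemma step_inv (X E Z : finType) (obs vuln : {set E}) (delta : X -> E -> option X) (X0 : {set X})
  (xi : Z -> E -> option Z) (z0 : Z) (S : seq E -> {set E}) :
  vuln \subset obs ->
  (forall z e z', e \notin obs -> xi z e = Some z' -> z' = z) ->
  (forall x0 s, x0 \in X0 -> inCL obs delta S x0 s ->
     exists z, dstar xi z0 s = Some z /\ DeltaH xi z = S (proj obs s)) ->
  forall m a m', stepM obs vuln delta xi m a m' ->
  forall hp, Inv obs delta X0 S xi z0 hp m -> Inv obs delta X0 S xi z0 (rcons hp a) m'.
Proof.
move=> Hsub Hxi Hreal m a m' [].
- move=> q qt z e HO hp /= [Hz HE]. rewrite tam_rcons cats0.
  split; first by case: HO. split=> //. exact: Hz.
- move=> q qt z e o HV Hne hp /= [He [Hz HE]]. split; first by [].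
  move=> y. split; last by move=> /UR_set0 Hq; exfalso; apply: Hne; exists y.
  move=> HEst; exfalso; apply: Hne. case: o HV HEst => [ea|] HV; rewrite tam_rcons.
  + have Hea : ea \in obs.
      move: HV; rewrite /Vset; case: ifP => Hv; first by move=> H; exact: (subsetP Hsub).
      by move=> [Ee]; subst ea.
    rewrite cats1 Est_rcons // => -[_ [x [w [[x1 [Hx1 Hdx]] _]]]].
    exists x; exists x1; split=> //. exact/HE.
  + rewrite cats0 => H. exists y. exact/HE.
- move=> q qt z e HV Hex hp /= [He [Hz HE]]. rewrite tam_rcons cats0.
  split; first by move=> z' [<-].
  move=> y. rewrite /qnext /= UR_UR. exact: HE.
- move=> q qt z e ea z' HV Hex Hxz hp /= [He [Hz HE]]. rewrite tam_rcons cats1.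
  have Hea : ea \in obs.
    move: HV; rewrite /Vset; case: ifP => Hv; first by move=> H; exact: (subsetP Hsub).
    by move=> [Ee]; subst ea.
  have [x [x1 [Hx1 Hdx]]] := Hex.
  have Hx1' : Est obs delta X0 S (tam hp) x1 by apply/HE.
  have HSb := real_Est Hxi Hreal Hx1' Hz.
  have HaS : ea \in S (tam hp) by rewrite -HSb /DeltaH inE Hxz.
  have Hz' : dstar xi z0 (rcons (tam hp) ea) = Some z'.
    by rewrite -cats1 dstar_cat Hz /= Hxz.
  have HEx : Est obs delta X0 S (rcons (tam hp) ea) x.
    apply/Est_rcons => //. split=> //. exists x, [::]. split=> //. by exists x1.
  have HSb' := real_Est Hxi Hreal HEx Hz'.
  split; first by move=> z'' [<-].
  move=> y. rewrite Est_rcons // HSb'. split.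
  + move=> [_ H]. move: H. apply: (fun H => proj1 (UR_ext _ _ _ _ H)) => x2. apply: NX_ext => x3. exact: HE.
  + move=> H; split=> //. move: H. apply: (fun H => proj2 (UR_ext _ _ _ _ H)) => x2. apply: NX_ext => x3. exact: HE.
Qed.

Lemma run_inv (X E Z : finType) (obs vuln : {set E}) (delta : X -> E -> option X) (X0 : {set X})
  (xi : Z -> E -> option Z) (z0 : Z) (S : seq E -> {set E}) :
  vuln \subset obs ->
  (forall z e z', e \notin obs -> xi z e = Some z' -> z' = z) ->
  (forall x0 s, x0 \in X0 -> inCL obs delta S x0 s ->
     exists z, dstar xi z0 s = Some z /\ DeltaH xi z = S (proj obs s)) ->
  forall m h m', runM obs vuln delta xi m h m' ->
  forall hp, Inv obs delta X0 S xi z0 hp m -> Inv obs delta X0 S xi z0 (hp ++ h) m'.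
Proof.
move=> Hsub Hxi Hreal m h m'; elim=> [m0|m0 a m1 h0 m2 Hst _ IH] hp Hi.
- by rewrite cats0.
- rewrite -cat_rcons. apply: IH. exact: (step_inv Hsub Hxi Hreal Hst).
Qed.

Theorem proposition1 (X E Z : finType) (obs ctrl vuln : {set E})
  (delta : X -> E -> option X) (X0 : {set X})
  (xi : Z -> E -> option Z) (z0 : Z) (S : seq E -> {set E}) :
  (* Sigma_v subset of Sigma_o *)
  vuln \subset obs ->
  (* S : P(L(G)) -> Gamma : uncontrollable events always enabled *)
  (forall x0 s e, x0 \in X0 -> inLG delta x0 s -> e \notin ctrl -> e \in S (proj obs s)) ->
  (* H changes state only on observable events *)
  (forall z e z', e \notin obs -> xi z e = Some z' -> z' = z) ->
  (* H realizes S *)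
  (forall x0 s, x0 \in X0 -> inCL obs delta S x0 s ->
     exists z, dstar xi z0 s = Some z /\ DeltaH xi z = S (proj obs s)) ->
  forall h q qt zo,
    runM obs vuln delta xi (@q0M X E Z X0 z0) h (Qe q qt zo) ->
    forall x, Est obs delta X0 S (tam h) x <-> UR obs delta (DeltaHo xi zo) q x.
Proof.
move=> Hsub _ Hxi Hreal h q qt zo Hrun.
have HS0 : forall x0, x0 \in X0 -> DeltaH xi z0 = S [::].
  move=> x0 Hx0.
  have Hcl : inCL obs delta S x0 [::] by split=> // t e u; case: t.
  have [z [Hz HD]] := Hreal x0 [::] Hx0 Hcl.
  by case: Hz HD => ->.
have Hi0 : Inv obs delta X0 S xi z0 [::] (@q0M X E Z X0 z0).
  split; first by move=> z [<-].
  move=> y /=. rewrite Est_nil. split.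
  - move=> H. have [x0 [w [Hx0 _]]] := H. by rewrite (HS0 x0 Hx0).
  - move=> H. have [x0 [w [Hx0 _]]] := H. by rewrite -(HS0 x0 Hx0).
have := run_inv Hsub Hxi Hreal Hrun Hi0. rewrite cat0s. by case.
Qed.
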